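(* Let $\tau>0$, $a\in\mathbb{R}$, $\varepsilon>0$, and let $v:[0,\tau]\times\mathbb{R}\to\mathbb{R}$ satisfy: (i) for every $t\in[0,\tau]$, the function $x\mapsto v(t,x)$ is decreasing (nonincreasing); (ii) for every Lipschitz curve $t\mapsto\gamma(t)$ with $\dot\gamma(t)\ge a-\varepsilon$, the function $t\mapsto v(t,\gamma(t))$ is decreasing (nonincreasing). Let $y,z:[0,\tau]\to\mathbb{R}$ be Lipschitz with $y(0)=z(0)=0$ and $\dot y(t)\ge a$, $\dot z(t)\ge a$ for a.e. $t\in[0,\tau]$. Define $v_{max}=\sup_{t,x}v(t,x)$, $v_{min}=\inf_{t,x}v(t,x)$ and $\delta(t)=\sup_{0<s<t}|y(s)-z(s)|$. Then for every $t\in[0,\tau]$, $$\int_0^t\big|v(s,y(s))-v(s,z(s))\big|\,ds\;\le\;2\delta(t)\cdot\frac{v_{max}-v_{min}}{\varepsilon}.$$ *)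

(* Defs.v *)
From HB Require Import structures.
From mathcomp Require Import all_boot all_order all_algebra.
From mathcomp Require Import all_classical all_reals all_analysis.
Set Implicit Arguments. Unset Strict Implicit. Unset Printing Implicit Defensive.
Import Order.TTheory GRing.Theory Num.Theory.
Import numFieldNormedType.Exports.
Local Open Scope classical_set_scope.
Local Open Scope ring_scope.

Definition lip_on_0 {R : realType} (tau : R) (g : R -> R) : Prop :=
  exists L : R, forall s t, s \in `[0, tau] -> t \in `[0, tau] ->
    `|g s - g t| <= L * `|s - t|.

Definition ae_deriv_ge_0 {R : realType} (tau : R) (g : R -> R) (b : R) : Prop :=
  {ae (@lebesgue_measure R), forall t, t \in `]0, tau[ ->
      derivable g t 1 /\ b <= derive1 g t}.

Definition noninc_on_0 {R : realType} (tau : R) (f : R -> R) : Prop :=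
  forall s t, s \in `[0, tau] -> t \in `[0, tau] -> s <= t -> f t <= f s.

Definition vmax {R : realType} (tau : R) (v : R -> R -> R) : \bar R :=
  ereal_sup [set r : \bar R | exists s x, s \in `[0, tau] /\ r = (v s x)%:E].
Definition vmin {R : realType} (tau : R) (v : R -> R -> R) : \bar R :=
  ereal_inf [set r : \bar R | exists s x, s \in `[0, tau] /\ r = (v s x)%:E].

(* delta(t) = sup_{0<s<t} |y(s) - z(s)|  (real sup; = 0 for t = 0) *)
Definition delta {R : realType} (y z : R -> R) (t : R) : R :=
  sup [set r : R | exists s, 0 < s < t /\ r = `|y s - z s|].

(* Main.v *)
Require Import Defs.
From HB Require Import structures.
From mathcomp Require Import all_boot all_order all_algebra.
From mathcomp Require Import all_classical all_reals all_analysis.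
From mathcomp Require Import ring lra.
From mathcomp Require Import measurable_realfun.
Import Order.TTheory GRing.Theory Num.Theory.
Import numFieldNormedType.Exports.
Local Open Scope classical_set_scope.
Local Open Scope ring_scope.

Section S.
Context {R : realType}.
Local Notation mu := (@lebesgue_measure R).

Lemma mshift (h : R) : measurable_fun setT (fun x : R => x + h).
Proof. by apply: measurable_realfun.measurable_funD => //; exact: measurable_cst. Qed.

Lemma pushshift (h : R) A : measurable A ->
  pushforward mu ((fun x : R => x + h) : _ -> measurableTypeR R) A = mu A.
Proof.
have mh := mshift h.
move=> mA; apply/esym/lebesgue_measure_unique => //= _ [[c d]] _ <-.
rewrite /pushforward.
have -> : (fun x => x + h) @^-1` `]c, d]%classic = `]c - h, d - h]%classic.
  by apply/seteqP; split => x /=; rewrite !in_itv/= ltrBlDr lerBrDr.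
rewrite !lebesgue_measure_itv/= !lte_fin ltrD2r; case: ifP => // _.
by rewrite -!EFinD; congr (_%:E); ring.
Qed.

Lemma shift_int (f : R -> \bar R) (a b h : R) : measurable_fun [set: R] f ->
  (forall x, (0 <= f x)%E) ->
  (\int[mu]_(x in `[a, b[) f ((x : R) + h)%R = \int[mu]_(x in `[(a + h)%R, (b + h)%R[) f x)%E.
Proof.
move=> mf f0.
have mh := mshift h.
transitivity (\int[pushforward mu ((fun x : R => (x + h)%R) : _ -> measurableTypeR R)]_(x in `[(a + h)%R, (b + h)%R[) f x)%E; last first.
  apply: eq_measure_integral => B mB _.
  exact: pushshift.
symmetry. etransitivity. apply: ge0_integral_pushforward.
- exact: mh.
- by [].
- exact: measurable_funTS.
- by move=> x _.
have -> : (fun x => x + h) @^-1` `[a + h, b + h[%classic = `[a, b[%classic.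
  by apply/seteqP; split => x /=; rewrite !in_itv/= lerD2r ltrD2r.
by [].
Qed.
End S.

Lemma curve_ok (R : realType) (tau a eps : R) (v : R -> R -> R) (w : R -> R) :
  (forall gamma : R -> R, lip_on_0 tau gamma ->
     ae_deriv_ge_0 tau gamma (a - eps) ->
     noninc_on_0 tau (fun t => v t (gamma t))) ->
  lip_on_0 tau w -> ae_deriv_ge_0 tau w a ->
  forall c k, 0 <= k <= eps -> forall s1 s2, 0 <= s1 -> s1 <= s2 -> s2 <= tau ->
  v s2 (w s2 + c - k * s2) <= v s1 (w s1 + c - k * s1).
Proof.
move=> vcur [L hL] dw c k /andP[k0 keps] s1 s2 s10 s12 s2t.
have := vcur (fun r => w r + c - k * r).
rewrite /noninc_on_0; apply => //; rewrite ?in_itv/=; try (apply/andP; split; lra).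
- exists (`|L| + k) => s t sI tI.
  have := hL s t sI tI.
  have -> : w s + c - k * s - (w t + c - k * t) = (w s - w t) - k * (s - t) by ring.
  move=> H; apply: (le_trans (ler_normB _ _)).
  rewrite mulrDl normrM (ger0_norm k0).
  apply: lerD; last by [].
  apply: (le_trans H); apply: ler_wpM2r => //; exact: ler_norm.
- rewrite /ae_deriv_ge_0; move: dw; apply: (@filterS _ _ (ae_filter_ringOfSetsType (@lebesgue_measure R))) => x Hx xI.
  have [dx ax] := Hx xI.
  have Dw := derivableP dx.
  have Dc : is_derive x 1 (cst c : R -> R) 0 by apply: is_derive_cst.
  have Dk : is_derive x 1 (k *: (id : R -> R)) (k *: (1 : R)).
    by apply: is_deriveZ; apply: is_derive_id.
  have D1 := is_deriveB (is_deriveD Dw Dc) Dk.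
  have -> : (fun r => w r + c - k * r) = ((w + cst c) - k *: id)%R.
    by apply/funext => r /=.
  split; first exact: (@ex_derive _ _ _ _ _ _ _ D1).
  rewrite derive1E (@derive_val _ _ _ _ _ _ _ D1) -derive1E.
  rewrite addr0 /GRing.scale /= mulr1; lra.
Qed.

Lemma split_co (R : realType) (f : R -> \bar R) (a c b : R) : a <= c -> c <= b ->
  measurable_fun setT f -> (forall x, 0 <= f x)%E ->
  (\int[@lebesgue_measure R]_(x in `[a, b[) f x =
   \int[@lebesgue_measure R]_(x in `[a, c[) f x + \int[@lebesgue_measure R]_(x in `[c, b[) f x)%E.
Proof.
move=> ac cb mf f0.
rewrite (@itv_bndbnd_setU _ _ (BLeft a) (BLeft c) (BLeft b)) ?bnd_simp //.
apply: ge0_integral_setU => //.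
- exact: measurable_funTS.
- rewrite disj_set2E; apply/eqP/seteqP; split => x //=.
  rewrite !in_itv /= => -[/andP[_ xc] /andP[cx _]]; lra.
Qed.

Ltac clean := repeat match goal with H : ?T |- _ =>
  lazymatch T with
  | context [EFin _] => clear H
  | context [\int[_]_(_ in _) _] => clear H
  | is_true (_ <= _) => fail
  | is_true (_ < _) => fail
  | is_true (_ && _) => fail
  | @eq _ _ _ => fail
  | _ => clear H
  end end.
Ltac tlra := clean; lra.

Theorem lemma4p1 (R : realType) (tau a eps : R) (v : R -> R -> R)
  (y z : R -> R) :
  0 < tau -> 0 < eps ->
  (forall t, t \in `[0, tau] ->
     forall x1 x2 : R, x1 <= x2 -> v t x2 <= v t x1) ->
  (forall gamma : R -> R, lip_on_0 tau gamma ->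
     ae_deriv_ge_0 tau gamma (a - eps) ->
     noninc_on_0 tau (fun t => v t (gamma t))) ->
  lip_on_0 tau y -> lip_on_0 tau z ->
  y 0 = 0 -> z 0 = 0 ->
  ae_deriv_ge_0 tau y a -> ae_deriv_ge_0 tau z a ->
  forall t, t \in `[0, tau] ->
    (\int[@lebesgue_measure R]_(s in `[0%R, t]) (`|v s (y s) - v s (z s)|)%:E
      <= (2 * delta y z t)%:E * (vmax tau v - vmin tau v) * (eps^-1)%:E)%E.
Proof.
move=> tau0 eps0 vdec vcur ly lz y0 z0 dy dz t tI.
have /andP[t0 ttau] : 0 <= t <= tau by move: tI; rewrite in_itv.
have [Ly hy] := ly; have [Lz hz] := lz.
have gbd : forall (g : R -> R) L, g 0 = 0 ->
    (forall s t, s \in `[0, tau] -> t \in `[0, tau] -> `|g s - g t| <= L * `|s - t|) ->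
    forall s, 0 <= s <= tau -> `|g s| <= `|L| * tau.
  move=> g L g0 hg s /andP[s0 st].
  have := hg s 0; rewrite !in_itv /= s0 st lexx (ltW tau0) g0 !subr0 => /(_ isT isT) H.
  apply: (le_trans H); apply: (@le_trans _ _ (`|L| * `|s|)).
    by apply: ler_wpM2r => //; exact: ler_norm.
  by rewrite (ger0_norm s0); apply: ler_wpM2l.
set d := delta y z t.
have dS : forall s, 0 < s < t -> `|y s - z s| <= d.
  move=> s hs; apply: sup_upper_bound; last by exists s.
  split; first by exists `|y s - z s|, s.
  exists ((`|Ly| + `|Lz|) * tau) => r [s' [/andP[hs1 hs2] ->]].
  have s'I : 0 <= s' <= tau by apply/andP; split; tlra.
  apply: (le_trans (ler_normB _ _)); rewrite mulrDl.
  by apply: lerD; [exact: gbd | exact: gbd].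
have d0 : 0 <= d.
  case: (ltrP 0 t) => [tpos|tle].
    apply: (le_trans _ (dS (t / 2) _)); first exact: normr_ge0.
    apply/andP; split; tlra.
  rewrite /d /delta.
  have -> : [set r | exists s, 0 < s < t /\ r = `|y s - z s|] = set0.
    apply/seteqP; split => r //= [s [/andP[h1 h2] _]]; tlra.
  by rewrite sup0.
have dS0 : forall s, 0 <= s < t -> `|y s - z s| <= d.
  move=> s /andP[s0 st]; case: (ltrP 0 s) => sp.
    by apply: dS; rewrite sp st.
  have -> : s = 0 by tlra.
  by rewrite y0 z0 subrr normr0.
pose cl s := if s < 0 then 0 else if tau < s then tau else s.
have clI : forall s, 0 <= cl s <= tau.
  move=> s; rewrite /cl; case: ltrP => h1; [|case: ltrP => h2]; apply/andP; split; tlra.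
have clid : forall s, 0 <= s <= tau -> cl s = s.
  move=> s /andP[s0 st]; rewrite /cl; case: ltrP => h1; [tlra|case: ltrP => h2 //; tlra].
have clmono : forall s1 s2, s1 <= s2 -> cl s1 <= cl s2.
  move=> s1 s2 h; rewrite /cl.
  case: (ltrP s1 0) => a1; case: (ltrP s2 0) => a2; try case: (ltrP tau s1) => b1;
    try case: (ltrP tau s2) => b2; tlra.
have clI' : forall s, cl s \in `[0, tau] by move=> s; rewrite in_itv /=; exact: clI.
have curY := @curve_ok _ _ _ _ _ _ vcur ly dy.
have curZ := @curve_ok _ _ _ _ _ _ vcur lz dz.
have k00 : (0:R) <= 0 <= eps by apply/andP; split; tlra.
pose P s := v (cl s) (y (cl s)).
pose Q s := v (cl s) (z (cl s)).
pose G s := `|P s - Q s|.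
have Pni : forall s1 s2, s1 <= s2 -> P s2 <= P s1.
  move=> s1 s2 h; have /andP[c1 c1'] := clI s1; have /andP[c2 c2'] := clI s2.
  have := curY 0 0 k00 (cl s1) (cl s2) c1 (clmono _ _ h) c2'.
  by rewrite !addr0 !mul0r !subr0.
have Qni : forall s1 s2, s1 <= s2 -> Q s2 <= Q s1.
  move=> s1 s2 h; have /andP[c1 c1'] := clI s1; have /andP[c2 c2'] := clI s2.
  have := curZ 0 0 k00 (cl s1) (cl s2) c1 (clmono _ _ h) c2'.
  by rewrite !addr0 !mul0r !subr0.
have mG : measurable_fun setT (fun s => (G s)%:E).
  apply/measurable_EFinP; rewrite /G.
  apply: measurableT_comp => //.
  apply: measurable_funB.
    by apply: nonincreasing_measurable => // m n mn; exact: Pni.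
  by apply: nonincreasing_measurable => // m n mn; exact: Qni.
have -> : (\int[@lebesgue_measure R]_(s in `[0%R, t]) (`|v s (y s) - v s (z s)|)%:E =
    \int[@lebesgue_measure R]_(s in `[0%R, t[) (G s)%:E)%E.
  transitivity (\int[@lebesgue_measure R]_(s in `[0%R, t]) (G s)%:E)%E.
    apply: eq_integral => s; rewrite inE /= in_itv /= => /andP[s0 st].
    by rewrite /G /P /Q clid // s0 (le_trans st ttau).
  by rewrite integral_itv_bndo_bndc //; exact: measurable_funTS.
case: (ltrP 0 d) => [dpos|dle]; last first.
  have d00 : d = 0 by tlra.
  rewrite d00 mulr0 !mul0e.
  rewrite (eq_integral (cst 0%E)) ?integral0 // => s; rewrite inE /= in_itv /= => /andP[s0 st].
  have := dS0 s (introT andP (conj s0 st)); rewrite d00 normr_le0 subr_eq0 => /eqP yz.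
  have sI : 0 <= s <= tau by apply/andP; split; tlra.
  by rewrite /G /P /Q clid // yz subrr normr0.
have v00 : (vmin tau v <= (v 0 0)%:E <= vmax tau v)%E.
  have w : [set r : \bar R | exists s x, s \in `[0, tau] /\ r = (v s x)%:E] (v 0 0)%:E.
    by exists 0, 0; split => //; rewrite in_itv /= lexx ltW.
  by rewrite ereal_inf_lbound // ereal_sup_ubound.
have vmaxb : forall s x, s \in `[0, tau] -> ((v s x)%:E <= vmax tau v)%E.
  by move=> s x sI; apply: ereal_sup_ubound; exists s, x.
have vminb : forall s x, s \in `[0, tau] -> (vmin tau v <= (v s x)%:E)%E.
  by move=> s x sI; apply: ereal_inf_lbound; exists s, x.
have d2 : (0 < (2 * d)%:E)%E by rewrite lte_fin; tlra.
have ei : (0 < (eps^-1)%:E)%E by rewrite lte_fin invr_gt0.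
move: v00 vmaxb vminb.
case: (vmax tau v) => [M| |]; case: (vmin tau v) => [m| |] //= v00 vmaxb vminb;
  try by rewrite ?addey ?addye // gt0_muley // gt0_mulye // leey.
all: try by move: v00 => /andP[_]; rewrite leeNy_eq.
have vbd : forall s x, 0 <= s <= tau -> m <= v s x <= M.
  move=> s x sI; have sI' : s \in `[0, tau] by rewrite in_itv.
  by rewrite -!lee_fin vmaxb // vminb.
have eps0' : eps != 0 by rewrite gt_eqF.
pose h := 2 * d / eps.
have hpos : 0 < h by rewrite /h divr_gt0 // mulr_gt0.
have ehd : eps * h = 2 * d by rewrite /h; field.
pose A s := v (cl s) (y (cl s) - d).
pose D s := if s < t then A s - m else 0.
have Ani : forall s1 s2, s1 <= s2 -> A s2 <= A s1.
  move=> s1 s2 hs; have /andP[c1 c1'] := clI s1; have /andP[c2 c2'] := clI s2.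
  have := curY (- d) 0 k00 (cl s1) (cl s2) c1 (clmono _ _ hs) c2'.
  by rewrite !mul0r !subr0.
have Ab : forall s, m <= A s <= M by move=> s; apply: vbd; exact: clI.
have D0 : forall s, 0 <= D s.
  move=> s; rewrite /D; case: ifP => // _; have := Ab s; tlra.
have DM : forall s, D s <= M - m.
  move=> s; rewrite /D; case: ifP => _; have := Ab s; tlra.
have Dni : forall s1 s2, s1 <= s2 -> D s2 <= D s1.
  move=> s1 s2 hs; rewrite /D; case: (ltrP s2 t) => h2.
    have h1 : s1 < t by tlra.
    rewrite h1; have := Ani _ _ hs; tlra.
  exact: D0.
have mD : measurable_fun setT (fun s => (D s)%:E).
  apply/measurable_EFinP.
  by apply: nonincreasing_measurable => // p q pq; exact: Dni.
have mDh : measurable_fun setT (fun s : R => (D (s + h))%:E).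
  apply/measurable_EFinP.
  by apply: nonincreasing_measurable => // p q pq; apply: Dni; rewrite lerD2r.
have key : forall s, 0 <= s < t -> G s + D (s + h) <= D s.
  move=> s /andP[s0 st].
  have sI : 0 <= s <= tau by apply/andP; split; tlra.
  have sI' : s \in `[0, tau] by rewrite in_itv.
  have := dS0 s (introT andP (conj s0 st)).
  rewrite ler_norml => /andP[h1 h2].
  rewrite /G /P /Q /D /A st (clid s sI).
  have e1 : v s (y s + d) <= v s (y s) by apply: vdec => //; tlra.
  have e2 : v s (y s) <= v s (y s - d) by apply: vdec => //; tlra.
  have e3 : v s (y s + d) <= v s (z s) by apply: vdec => //; tlra.
  have e4 : v s (z s) <= v s (y s - d) by apply: vdec => //; tlra.
  have absb : `|v s (y s) - v s (z s)| <= v s (y s - d) - v s (y s + d).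
    by rewrite ler_norml; apply/andP; split; tlra.
  have /andP[Bm _] := vbd s (y s + d) sI.
  case: (ltrP (s + h) t) => sh.
    have shI : 0 <= s + h <= tau by apply/andP; split; tlra.
    rewrite (clid _ shI).
    have ke : (0:R) <= eps <= eps by apply/andP; split; tlra.
    have ss : s <= s + h by tlra.
    have st2 : s + h <= tau by tlra.
    have := curY (d + eps * s) eps ke s (s + h) s0 ss st2.
    have -> : y (s + h) + (d + eps * s) - eps * (s + h) = y (s + h) - d.
      by rewrite mulrDr ehd; ring.
    have -> : y s + (d + eps * s) - eps * s = y s + d by ring.
    tlra.
  tlra.
have BD : forall p q, 0 <= p <= q ->
    (\int[@lebesgue_measure R]_(s in `[p, q[) (D s)%:E <= ((M - m) * (q - p))%:E)%E.
  move=> p q /andP[p0 pq].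
  apply: (@le_trans _ _ (\int[@lebesgue_measure R]_(s in `[p, q[) ((M - m)%:E))%E).
    apply: ge0_le_integral => //.
    - by move=> x _; rewrite lee_fin.
    - exact: measurable_funTS.
    - by move=> x _; rewrite lee_fin.
  rewrite integral_cst //= lebesgue_measure_itv /= lte_fin.
  case: ifP => hpq.
    by rewrite -EFinB -EFinM.
  have -> : q = p by move: hpq => /negbT; rewrite -leNgt; tlra.
  by rewrite subrr mulr0 mule0.
have -> : ((2 * d)%:E * (M%:E + (- m)%:E) * (eps^-1)%:E = ((M - m) * h)%:E)%E.
  by rewrite -!EFinD -!EFinM /h; congr EFin; field.
have G0 : forall s, 0 <= G s by move=> s; exact: normr_ge0.
have MmD : 0 <= M - m by have := DM 0; have := D0 0; tlra.
case: (leP t h) => th.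
  apply: (@le_trans _ _ (\int[@lebesgue_measure R]_(s in `[0%R, t[) (D s)%:E)%E).
    apply: ge0_le_integral => //.
    - by move=> x _; rewrite lee_fin.
    - exact: measurable_funTS.
    - exact: measurable_funTS.
    - move=> x; rewrite /= in_itv /= => xI; rewrite lee_fin.
      have := key x xI; have := D0 (x + h); tlra.
  apply: le_trans (BD 0 t _) _; first by apply/andP; split.
  by rewrite lee_fin subr0; apply: ler_wpM2l.
have le1 : (\int[@lebesgue_measure R]_(s in `[0%R, t[) ((G s)%:E + (D (s + h))%:E) <=
    \int[@lebesgue_measure R]_(s in `[0%R, t[) (D s)%:E)%E.
  apply: ge0_le_integral => //.
  - by move=> x _; rewrite -EFinD lee_fin; have := G0 x; have := D0 (x + h); tlra.
  - apply: measurable_funTS; exact: emeasurable_funD.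
  - exact: measurable_funTS.
rewrite ge0_integralD // in le1; last 4 first.
- by move=> x _; rewrite lee_fin.
- exact: measurable_funTS.
- by move=> x _; rewrite lee_fin.
- exact: measurable_funTS.
have E2 : (\int[@lebesgue_measure R]_(s in `[0%R, t[) (D (s + h))%:E =
    \int[@lebesgue_measure R]_(s in `[h, t[) (D s)%:E)%E.
  have := @shift_int R (fun s => (D s)%:E) 0 t h mD (fun x => D0 x).
  rewrite /= add0r => ->.
  have Dp : forall x, (0 <= (fun s => (D s)%:E) x)%E by move=> x; rewrite lee_fin.
  have tth : t <= t + h by rewrite lerDl ltW.
  rewrite (@split_co R (fun s => (D s)%:E) h t (t + h) (ltW th) tth mD Dp).
  rewrite [X in (_ + X)%E](eq_integral (cst 0%E)) ?integral0 ?adde0 //.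
  move=> x; rewrite inE /= in_itv /= => /andP[tx _].
  by rewrite /D ltNge tx.
have Dp : forall x, (0 <= (fun s => (D s)%:E) x)%E by move=> x; rewrite lee_fin.
rewrite E2 (@split_co R (fun s => (D s)%:E) 0 h t (ltW hpos) (ltW th) mD Dp) in le1.
have Xfin : (\int[@lebesgue_measure R]_(s in `[h, t[) (D s)%:E)%E \is a fin_num.
  rewrite ge0_fin_numE; last by apply: integral_ge0 => x _; rewrite lee_fin.
  apply: le_lt_trans (BD h t _) _; last exact: ltry.
  by apply/andP; split; [exact: ltW | exact: ltW].
rewrite leeD2rE // in le1.
have B0h := BD 0 h (introT andP (conj (lexx 0) (ltW hpos))).
rewrite subr0 in B0h.
exact: (le_trans le1 B0h).
Qed.
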